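(* Let $r,\sigma,s,c,\lambda,a>0$ with $a<\lambda$ and $1-\lambda r>0$, and let $\theta=\sqrt{2r/\sigma^2}$. Let $C_{11},C_{12}\in\mathbb{R}$ and $\bar x_1<x_1^*<\bar x_2$ be such that, with $\varphi_1(x)=C_{11}e^{\theta x}+C_{12}e^{-\theta x}+\frac{x-s}{r}$, $$\varphi_1'(x_1^* )=\lambda,\ \ \varphi_1''(x_1^* )\le0,\ \ \varphi_1'(\bar x_1)=\lambda,\ \ \varphi_1(\bar x_1)=\varphi_1(x_1^* )-c-\lambda(x_1^*-\bar x_1),\ \ \varphi_1(\bar x_2)=a\bar x_2 .$$ Define $$W_1(x)=\begin{cases}ax & x\ge\bar x_2\\ \varphi_1(x) & \bar x_1<x<\bar x_2\\ \varphi_1(x_1^* )-c-\lambda(x_1^*-x) & x\le\bar x_1,\end{cases}$$ and, for $x\in\mathbb{R}$, $\mathcal{M}W_1(x)=\sup_{\delta\ge0}\{W_1(x+\delta)-c-\lambda\delta\}$. Then for each $x\in\mathbb{R}$ the maximizer over $\delta\ge0$ of $W_1(x+\delta)-c-\lambda\delta$ is unique and equals $$\delta(x)=(x_1^*-x)\mathbf{1}_{(-\infty,x_1^*]}(x),$$ and moreover $$\{x:\mathcal{M}W_1(x)-W_1(x)<0\}=(\bar x_1,\infty),\qquad \{x:\mathcal{M}W_1(x)-W_1(x)=0\}=(-\infty,\bar x_1].$$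
   Context: This is the candidate equilibrium payoff of player P1 in a linear impulse controller–stopper game: state $X_t=x+\sigma W_t+\sum_{\tau_n\le t}\delta_n$, P1 pays $c+\lambda|\delta|$ per impulse $\delta\ge0$, and receives running payoff $x-s$ and terminal payoff $ax$, all discounted at rate $r$. *)

(* Defs.v *)
From Stdlib Require Import Reals Lra.
From Coquelicot Require Import Coquelicot.
Open Scope R_scope.

Definition theta (r sigma : R) : R := sqrt (2 * r / sigma ^ 2).

Definition phi1 (r sigma s C11 C12 : R) (x : R) : R :=
  C11 * exp (theta r sigma * x) + C12 * exp (- (theta r sigma * x)) + (x - s) / r.

Definition W1 (r sigma s c lambda a C11 C12 xb1 xs1 xb2 : R) (x : R) : R :=
  if Rle_dec xb2 x then a * x
  else if Rlt_dec xb1 x then phi1 r sigma s C11 C12 x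
  else phi1 r sigma s C11 C12 xs1 - c - lambda * (xs1 - x).

Definition impulse_obj (W : R -> R) (c lambda x delta : R) : R :=
  W (x + delta) - c - lambda * delta.

Definition MW (W : R -> R) (c lambda x : R) : Rbar :=
  Lub_Rbar (fun y => exists delta, 0 <= delta /\ y = impulse_obj W c lambda x delta).

Definition delta_opt (xs1 x : R) : R :=
  if Rle_dec x xs1 then xs1 - x else 0.

(* Main.v *)
Require Import Defs.
From Stdlib Require Import Reals Lra Psatz.
From Coquelicot Require Import Coquelicot.
Open Scope R_scope.

Definition dphi (r sigma C11 C12 y : R) : R :=
  theta r sigma * (C11 * exp (theta r sigma * y) - C12 * exp (- (theta r sigma * y))) + / r.

Lemma phi1_derive r sigma s A B y : r <> 0 ->
  is_derive (phi1 r sigma s A B) y (dphi r sigma A B y).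
Proof. intros. unfold phi1, dphi. auto_derive; auto. field. auto. Qed.

Lemma theta_pos r sigma : 0 < r -> 0 < sigma -> 0 < theta r sigma.
Proof. intros. unfold theta. apply sqrt_lt_R0.
  apply Rdiv_lt_0_compat; [lra|]. apply pow_lt; lra. Qed.

Lemma alg_sign t A B D u1 v1 u2 v2 u v :
  0 < t -> D < 0 -> 0 < u1 -> u1 < u2 -> 0 < u ->
  u1 * v1 = 1 -> u2 * v2 = 1 -> u * v = 1 ->
  t*A*u1 - t*B*v1 = D -> t*A*u2 - t*B*v2 = D ->
  (u1 < u < u2 -> t*A*u - t*B*v > D) /\ (u2 < u -> t*A*u - t*B*v < D).
Proof.
  intros Ht HD H1 H12 Hu E1 E2 E H1' H2'.
  assert (h1 : t*A*u1*u1 - t*B - D*u1 = 0).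
  { replace (t*B) with (t*B*(u1*v1)) by (rewrite E1; ring). nra. }
  assert (h2 : t*A*u2*u2 - t*B - D*u2 = 0).
  { replace (t*B) with (t*B*(u2*v2)) by (rewrite E2; ring). nra. }
  assert (hA : t*A*(u1+u2) = D).
  { assert ((u2-u1)*(t*A*(u1+u2) - D) = 0) by nra.
    apply Rmult_integral in H. destruct H; lra. }
  assert (hB : t*B = - (t*A*u1*u2)) by nra.
  assert (tAneg : t*A < 0) by nra.
  assert (hq : t*A*u - t*B*v - D = t*A*(u-u1)*(u-u2)*v).
  { replace (t*A*u) with (t*A*u*(u*v)) by (rewrite E; ring).
    replace D with (D*(u*v)) by (rewrite E; ring). rewrite hB, <- hA. ring. }
  assert (0 < v) by nra.
  split; intros.
  - assert (0 < t*A*(u-u1)*(u-u2)) by (assert (0<(u-u1)*(u2-u)) by nra; nra). nra.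
  - assert (t*A*(u-u1)*(u-u2) < 0) by (assert (0<(u-u1)*(u-u2)) by nra; nra). nra.
Qed.

Lemma dphi_sign r sigma A B lambda x1 x2 y :
  0 < r -> 0 < sigma -> 0 < 1 - lambda * r -> x1 < x2 ->
  dphi r sigma A B x1 = lambda -> dphi r sigma A B x2 = lambda ->
  (x1 < y < x2 -> dphi r sigma A B y > lambda) /\ (x2 < y -> dphi r sigma A B y < lambda).
Proof.
  intros Hr Hs Hl H12 E1 E2.
  pose proof (theta_pos r sigma Hr Hs) as Ht.
  set (t := theta r sigma) in *.
  assert (HD : lambda - / r < 0).
  { assert (lambda * r < 1) by lra.
    assert (lambda < / r). { apply (Rmult_lt_reg_r r); auto. rewrite Rinv_l; lra. } lra. }
  assert (inv : forall z, exp (t*z) * exp (-(t*z)) = 1).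
  { intro z. rewrite <- exp_plus. replace (t*z + - (t*z)) with 0 by ring. apply exp_0. }
  unfold dphi in *; fold t in E1, E2 |- *.
  assert (Hm : forall a b, a < b -> exp (t*a) < exp (t*b)).
  { intros. apply exp_increasing. nra. }
  destruct (alg_sign t A B (lambda - / r) (exp (t*x1)) (exp (-(t*x1))) (exp (t*x2)) (exp (-(t*x2)))
     (exp (t*y)) (exp (-(t*y))) Ht HD (exp_pos _) (Hm _ _ H12) (exp_pos _) (inv _) (inv _) (inv _))
    as [P Q]; try lra.
  split; intros.
  - assert (t * A * exp (t * y) - t * B * exp (- (t * y)) > lambda - / r).
    { apply P. split; apply Hm; lra. } lra.
  - assert (t * A * exp (t * y) - t * B * exp (- (t * y)) < lambda - / r).
    { apply Q. apply Hm; lra. } lra.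
Qed.

Lemma psi_mvt r sigma s A B lambda y1 y2 : 0 < r -> y1 < y2 ->
  exists z, y1 < z < y2 /\
   (phi1 r sigma s A B y2 - lambda * y2) - (phi1 r sigma s A B y1 - lambda * y1)
   = (dphi r sigma A B z - lambda) * (y2 - y1).
Proof.
  intros Hr H.
  destruct (MVT_cor2 (fun y => phi1 r sigma s A B y - lambda * y)
     (fun y => dphi r sigma A B y - lambda) y1 y2 H) as [z [Hz1 Hz2]].
  { intros z _. apply is_derive_Reals.
    apply (is_derive_minus (phi1 r sigma s A B) (fun y => lambda * y)).
    - apply phi1_derive; lra.
    - auto_derive; auto; ring. }
  exists z. split; auto.
Qed.

Lemma lub_max (E : R -> Prop) m : E m -> (forall y, E y -> y <= m) -> Lub_Rbar E = Finite m.
Proof.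
  intros Hm Hub. apply is_lub_Rbar_unique. split.
  - intros y Hy. simpl. apply Hub; auto.
  - intros b Hb. apply Hb. auto.
Qed.

Theorem lemmaA1 (r sigma s c lambda a C11 C12 xb1 xs1 xb2 : R) :
  0 < r -> 0 < sigma -> 0 < s -> 0 < c -> 0 < lambda -> 0 < a ->
  a < lambda -> 0 < 1 - lambda * r ->
  xb1 < xs1 -> xs1 < xb2 ->
  Derive (phi1 r sigma s C11 C12) xs1 = lambda ->
  Derive_n (phi1 r sigma s C11 C12) 2 xs1 <= 0 ->
  Derive (phi1 r sigma s C11 C12) xb1 = lambda ->
  phi1 r sigma s C11 C12 xb1
    = phi1 r sigma s C11 C12 xs1 - c - lambda * (xs1 - xb1) ->
  phi1 r sigma s C11 C12 xb2 = a * xb2 ->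
  let W := W1 r sigma s c lambda a C11 C12 xb1 xs1 xb2 in
  (forall x : R,
      0 <= delta_opt xs1 x /\
      (forall d, 0 <= d ->
         impulse_obj W c lambda x d <= impulse_obj W c lambda x (delta_opt xs1 x)) /\
      (forall d, 0 <= d ->
         (forall d', 0 <= d' -> impulse_obj W c lambda x d' <= impulse_obj W c lambda x d) ->
         d = delta_opt xs1 x)) /\
  (forall x : R, Rbar_lt (MW W c lambda x) (Finite (W x)) <-> xb1 < x) /\
  (forall x : R, MW W c lambda x = Finite (W x) <-> x <= xb1).
Proof.
  intros Hr Hsig Hs Hc Hl Ha Hal Hlr H1 H2 Ds _ Db Eb E2 W.
  rewrite (is_derive_unique _ _ _ (phi1_derive r sigma s C11 C12 xs1 ltac:(lra))) in Ds.
  rewrite (is_derive_unique _ _ _ (phi1_derive r sigma s C11 C12 xb1 ltac:(lra))) in Db.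
  set (phi := phi1 r sigma s C11 C12) in *.
  pose proof (fun y => dphi_sign r sigma C11 C12 lambda xb1 xs1 y Hr Hsig Hlr H1 Db Ds) as Sg.
  set (psi := fun y => phi y - lambda * y).
  set (K := psi xs1).
  assert (Pinc : forall y1 y2, xb1 <= y1 -> y1 < y2 -> y2 <= xs1 -> psi y1 < psi y2).
  { intros y1 y2 A B C. destruct (psi_mvt r sigma s C11 C12 lambda y1 y2 Hr B) as [z [Hz Ez]].
    destruct (Sg z) as [P _]. assert (dphi r sigma C11 C12 z > lambda) by (apply P; lra).
    unfold psi, phi. nra. }
  assert (Pdec : forall y1 y2, xs1 <= y1 -> y1 < y2 -> psi y2 < psi y1).
  { intros y1 y2 A B. destruct (psi_mvt r sigma s C11 C12 lambda y1 y2 Hr B) as [z [Hz Ez]].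
    destruct (Sg z) as [_ Q]. assert (dphi r sigma C11 C12 z < lambda) by (apply Q; lra).
    unfold psi, phi. nra. }
  set (V := fun y => W y - lambda * y).
  assert (Vlow : forall y, y <= xb1 -> V y = K - c).
  { intros y Hy. unfold V, W, W1, K, psi. fold phi.
    destruct (Rle_dec xb2 y); [lra|]. destruct (Rlt_dec xb1 y); [lra|]. ring. }
  assert (Vmid : forall y, xb1 < y < xb2 -> V y = psi y).
  { intros y Hy. unfold V, W, W1, psi. fold phi.
    destruct (Rle_dec xb2 y); [lra|]. destruct (Rlt_dec xb1 y); [lra|lra]. }
  assert (Vhigh : forall y, xb2 <= y -> V y = (a - lambda) * y).
  { intros y Hy. unfold V, W, W1.
    destruct (Rle_dec xb2 y); [ring|lra]. }
  assert (Vs : V xs1 = K) by (apply Vmid; lra).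
  assert (psib : psi xb1 = K - c) by (unfold psi, K, psi; rewrite Eb; ring).
  assert (psi2 : psi xb2 = (a - lambda) * xb2) by (unfold psi; rewrite E2; ring).
  assert (Vdec : forall y1 y2, xs1 <= y1 -> y1 < y2 -> V y2 < V y1).
  { intros y1 y2 A B.
    destruct (Rle_dec xb2 y1).
    - rewrite !Vhigh by lra. nra.
    - rewrite (Vmid y1) by lra. destruct (Rle_dec xb2 y2).
      + rewrite Vhigh by lra. assert (psi xb2 < psi y1) by (apply Pdec; lra). nra.
      + rewrite Vmid by lra. apply Pdec; lra. }
  assert (Vmax : forall y, y <> xs1 -> V y < K).
  { intros y Hy. destruct (Rle_dec y xb1).
    - rewrite Vlow; lra.
    - destruct (Rlt_dec y xs1).
      + rewrite Vmid by lra. apply Pinc; lra.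
      + rewrite <- Vs. apply Vdec; lra. }
  assert (Vgt : forall y, xb1 < y <= xs1 -> K - c < V y).
  { intros y Hy. rewrite Vmid by lra. rewrite <- psib.
    destruct (Req_dec y xs1) as [->|]; [|apply Pinc; lra].
    apply Pinc; lra. }
  assert (Hobj : forall x d, impulse_obj W c lambda x d = V (x + d) + lambda * x - c).
  { intros. unfold impulse_obj, V. ring. }
  assert (Opt : forall x, 0 <= delta_opt xs1 x /\
      (forall d, 0 <= d ->
         impulse_obj W c lambda x d <= impulse_obj W c lambda x (delta_opt xs1 x)) /\
      (forall d, 0 <= d ->
         (forall d', 0 <= d' -> impulse_obj W c lambda x d' <= impulse_obj W c lambda x d) ->
         d = delta_opt xs1 x)).
  { intro x. unfold delta_opt. destruct (Rle_dec x xs1).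
    - replace (x + (xs1 - x)) with xs1 by ring.
      split; [lra|split].
      + intros d Hd. rewrite !Hobj. replace (x + (xs1 - x)) with xs1 by ring.
        destruct (Req_dec (x+d) xs1) as [E|E]; [rewrite E; lra|]. specialize (Vmax _ E). lra.
      + intros d Hd Hall. specialize (Hall (xs1 - x) ltac:(lra)). rewrite !Hobj in Hall.
        replace (x + (xs1 - x)) with xs1 in Hall by ring.
        destruct (Req_dec (x+d) xs1) as [E|E]; [lra|]. specialize (Vmax _ E). lra.
    - split; [lra|split].
      + intros d Hd. rewrite !Hobj. rewrite Rplus_0_r.
        destruct (Req_dec d 0) as [->|E]; [rewrite Rplus_0_r; lra|].
        assert (V (x+d) < V x) by (apply Vdec; lra). lra.
      + intros d Hd Hall. specialize (Hall 0 ltac:(lra)). rewrite !Hobj, Rplus_0_r in Hall.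
        destruct (Req_dec d 0) as [->|E]; [auto|].
        assert (V (x+d) < V x) by (apply Vdec; lra). lra. }
  assert (HMW : forall x, MW W c lambda x = Finite (impulse_obj W c lambda x (delta_opt xs1 x))).
  { intro x. unfold MW. destruct (Opt x) as [P0 [P1 _]]. apply lub_max.
    - exists (delta_opt xs1 x). split; auto.
    - intros y [d [Hd ->]]. apply P1; auto. }
  assert (Diff : forall x, impulse_obj W c lambda x (delta_opt xs1 x) - W x
                 = V (x + delta_opt xs1 x) - c - V x).
  { intro x. rewrite Hobj. unfold V. ring. }
  assert (Dneg : forall x, xb1 < x -> impulse_obj W c lambda x (delta_opt xs1 x) - W x < 0).
  { intros x Hx. rewrite Diff. unfold delta_opt. destruct (Rle_dec x xs1).
    - replace (x + (xs1 - x)) with xs1 by ring. rewrite Vs. specialize (Vgt x ltac:(lra)). lra.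
    - rewrite Rplus_0_r. lra. }
  assert (D0 : forall x, x <= xb1 -> impulse_obj W c lambda x (delta_opt xs1 x) - W x = 0).
  { intros x Hx. rewrite Diff. unfold delta_opt. destruct (Rle_dec x xs1); [|lra].
    replace (x + (xs1 - x)) with xs1 by ring. rewrite Vs, Vlow by lra. ring. }
  split; [exact Opt|split]; intro x; rewrite HMW; simpl; split; intro H.
  - destruct (Rlt_dec xb1 x); auto. specialize (D0 x ltac:(lra)). lra.
  - specialize (Dneg x H). lra.
  - injection H as H. destruct (Rle_dec x xb1); auto. specialize (Dneg x ltac:(lra)). lra.
  - f_equal. specialize (D0 x H). lra.
Qed.
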